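(* Let $K=2$ and suppose that for every horizon $T$ (a multiple of $100$) a valid pair $(\eta,\gamma)=(\eta_T,\gamma_T)$ in the non-trivial regime is chosen. Then there exist constants $c_1,c_2,c_3>0$ and $T_0$ such that for all $T\ge T_0$, WSU-UX run on the two-phase loss sequence satisfies $$\mathbb{E}[\mathcal R_T]\ge c_1\frac1\eta+c_2\frac{\eta TK}{\gamma}+c_3\gamma T.$$
   Context: WSU-UX. Fix integers $K\ge 2$ and $T\ge 1$ and hyperparameters $\eta,\gamma$. The pair $(\eta,\gamma)$ is called valid if $\eta,\gamma\in(0,1/2)$ and $\eta K/\gamma\le 1/2$. Given a fixed loss sequence $\ell_t\in[0,1]^K$, WSU-UX sets $\pi_{1,i}=1/K$ and in each round $t$: forms $\tilde\pi_{t,i}=(1-\gamma)\pi_{t,i}+\gamma/K$; draws $I_t$ with $\Pr(I_t=i\mid\mathcal F_{t-1})=\tilde\pi_{t,i}$; sets $\hat\ell_{t,i}=\ell_{t,i}\mathbf 1[I_t=i]/\tilde\pi_{t,i}$; and updates $\pi_{t+1,i}=\pi_{t,i}\bigl(1-\eta(\hat\ell_{t,i}-\sum_{j}\pi_{t,j}\hat\ell_{t,j})\bigr)$; $\mathcal F_t$ is the history generated by $I_1,\dots,I_t$. The regret is $\mathbb{E}[\mathcal R_T]=\mathbb{E}[\sum_{t}\sum_{j}\tilde\pi_{t,j}\ell_{t,j}]-\min_i\sum_t\ell_{t,i}$. Non-trivial regime: $\eta\ge T^{-2/3}$ and $\gamma\le T^{-1/3}$. Two-phase loss sequence ($K=2$,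 $T$ a multiple of $100$, $T_1=T/100$): $\ell_{t,1}=1,\ell_{t,2}=0$ for $1\le t\le T_1$ and $\ell_{t,1}=0,\ell_{t,2}=1$ for $T_1<t\le T$. *)

(* Defs.v *)
From HB Require Import structures.
From mathcomp Require Import all_boot all_order all_algebra.
From mathcomp Require Import all_classical all_reals all_analysis.
Set Implicit Arguments. Unset Strict Implicit. Unset Printing Implicit Defensive.
Import Order.TTheory GRing.Theory Num.Theory.
Local Open Scope ring_scope.

Section WSUUX.
Variable R : realType.

Definition valid (K : nat) (eta gamma : R) : Prop :=
  0 < eta /\ eta < 1/2 /\ 0 < gamma /\ gamma < 1/2 /\ eta * K%:R / gamma <= 1/2.

Definition nontrivial (T : nat) (eta gamma : R) : Prop :=
  (T%:R `^ (- (2 / 3))) <= eta /\ gamma <= (T%:R `^ (- (1 / 3))).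

Definition mix (K : nat) (gamma : R) (pi : 'I_K -> R) (i : 'I_K) : R :=
  (1 - gamma) * pi i + gamma / K%:R.

Definition lhat (K : nat) (gamma : R) (pi : 'I_K -> R) (lt : 'I_K -> R)
    (I : 'I_K) (i : 'I_K) : R :=
  lt i * (i == I)%:R / mix gamma pi i.

Definition update (K : nat) (eta gamma : R) (pi : 'I_K -> R) (lt : 'I_K -> R)
    (I : 'I_K) (i : 'I_K) : R :=
  pi i * (1 - eta * (lhat gamma pi lt I i
                     - \sum_(j < K) pi j * lhat gamma pi lt I j)).

(* Expected cumulative mixed loss  E[ sum_{s=t}^{t+n-1} sum_j tilde pi_{s,j} l_{s,j} ]
   starting at round t from weights pi, computed exactly by conditioning on the
   draw I_s (Pr(I_s = i | F_{s-1}) = tilde pi_{s,i}). *)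
Fixpoint expLoss (K : nat) (eta gamma : R) (l : nat -> 'I_K -> R)
    (n t : nat) (pi : 'I_K -> R) : R :=
  match n with
  | 0 => 0
  | n'.+1 =>
      \sum_(j < K) mix gamma pi j * l t j
      + \sum_(i < K) mix gamma pi i *
          expLoss eta gamma l n' t.+1 (update eta gamma pi (l t) i)
  end.

Definition expRegret (k : nat) (eta gamma : R) (l : nat -> 'I_k.+1 -> R)
    (T : nat) : R :=
  expLoss eta gamma l T 1 (fun _ => 1 / k.+1%:R)
  - \big[Num.min/ \sum_(1 <= t < T.+1) l t ord0]_(i < k.+1)
        \sum_(1 <= t < T.+1) l t i.

(* Two-phase loss sequence, K = 2, T1 = T/100; arm 1 = ord0, arm 2 = ord_max. *)
Definition two_phase (T : nat) (t : nat) (i : 'I_2) : R :=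
  if (t <= T %/ 100)%N then (if i == ord0 then 1 else 0)
  else (if i == ord0 then 0 else 1).

End WSUUX.

(* Main.v *)
Require Import Defs.
From HB Require Import structures.
From mathcomp Require Import all_boot all_order all_algebra.
From mathcomp Require Import all_classical all_reals all_analysis.
From mathcomp Require Import ring lra zify.
Import Order.TTheory GRing.Theory Num.Theory.
Local Open Scope ring_scope.
Set Implicit Arguments. Unset Strict Implicit.


Lemma ln_le_sub1 (R : realType) (x : R) : 0 < x -> ln x <= x - 1.
Proof.
move=> x0; have h : ln (1 + (x - 1)) <= x - 1 by apply: le_ln1Dx; lra.
by rewrite addrCA subrr addr0 in h.
Qed.

Lemma ln1m_le (R : realType) (v : R) : 0 <= v -> v <= 1/2 -> ln (1 - v) <= - v - v^+2 / 4%:R.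
Proof.
move=> v0 v1.
set s := 1 - v/2 - v^+2/8%:R.
have s0 : 0 < s by rewrite /s; nra.
have h1 : 1 - v <= s * s by rewrite /s; nra.
have h2 : ln (1 - v) <= ln (s * s).
  by rewrite ler_ln // posrE; [lra | exact: mulr_gt0].
rewrite lnM ?posrE // in h2.
have h3 := ln_le_sub1 s0; rewrite /s in h3 h2 *.
lra.
Qed.

Lemma ln1p_le (R : realType) (w : R) : 0 <= w -> ln (1 + w) <= w.
Proof. move=> w0; apply: le_ln1Dx; lra. Qed.

Lemma negln_le (R : realType) (x : R) : 0 < x -> - ln x <= (1 - x) / x.
Proof.
move=> x0; rewrite -lnV ?posrE //.
have xi : 0 < x^-1 by rewrite invr_gt0.
have := ln_le_sub1 xi.
by rewrite mulrBl divff ?gt_eqF // mul1r.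
Qed.


Definition pp (R : realType) (g x : R) := (1 - g) * x + g / 2.

Lemma pp_gt0 (R : realType) (g x : R) : 0 < g -> g < 1/2 -> 0 < x -> 0 < pp g x.
Proof. move=> g0 g1 x0; have : 0 < (1 - g) * x by apply: mulr_gt0 => //; lra. rewrite /pp; lra. Qed.

Lemma pp_ge (R : realType) (g x : R) : 0 < g -> g < 1/2 -> 0 <= x -> g / 2 <= pp g x.
Proof. move=> g0 g1 x0; have : 0 <= (1 - g) * x by apply: mulr_ge0 => //; lra. rewrite /pp; lra. Qed.

Lemma pp_gex (R : realType) (g x : R) : 0 < g -> g < 1/2 -> 0 <= x -> x / 2 <= pp g x.
Proof. move=> g0 g1 x0; have : 0 <= (1/2 - g) * x by apply: mulr_ge0 => //; lra. rewrite /pp; lra. Qed.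


Definition vv (R : realType) (e g x : R) := e * (1 - x) / pp g x.


Lemma pv1 (R : realType) (e g x : R) (e0 : 0 < e) (e1 : e < 1/2) (g0 : 0 < g) (g1 : g < 1/2) (eg : 4 * e <= g)
  (x0 : 0 < x) (x1 : x < 1) : pp g x * vv e g x = e * (1 - x).
Proof.
have hp := pp_gt0 g0 g1 x0.
rewrite /vv mulrCA divff ?mulr1 //; exact: lt0r_neq0.
Qed.

Lemma vv_ge0 (R : realType) (e g x : R) (e0 : 0 < e) (e1 : e < 1/2) (g0 : 0 < g) (g1 : g < 1/2) (eg : 4 * e <= g)
  (x0 : 0 < x) (x1 : x < 1) : 0 <= vv e g x.
Proof.
have hp := pp_gt0 g0 g1 x0.
rewrite /vv; apply: divr_ge0; last exact: ltW.
apply: mulr_ge0; lra.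
Qed.

Lemma vv_le (R : realType) (e g x : R) (e0 : 0 < e) (e1 : e < 1/2) (g0 : 0 < g) (g1 : g < 1/2) (eg : 4 * e <= g)
  (x0 : 0 < x) (x1 : x < 1) : vv e g x <= 1/2.
Proof.
have hp := pp_gt0 g0 g1 x0; have hpv := pv1.
have hg := pp_ge g0 g1 (ltW x0).
have : e * (1 - x) <= e by rewrite ler_piMr; lra.
move=> h.
have : pp g x * vv e g x <= pp g x * (1/2) by rewrite hpv; lra.
by rewrite ler_pM2l.
Qed.


Ltac nz := repeat match goal with |- is_true (_ != 0) => apply/lt0r_neq0 end;
  repeat match goal with |- is_true (0 < _ * _) => apply: mulr_gt0 | |- is_true (0 < _ ^+ _) => apply: exprn_gt0 end;
  try assumption; try lra.

Lemma ln_ph1 (R : realType) (e g x : R) (e0 : 0 < e) (e1 : e < 1/2) (g0 : 0 < g) (g1 : g < 1/2) (eg : 4 * e <= g)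
  (x0 : 0 < x) (x1 : x < 1) :
  pp g x * ln (x * (1 - vv e g x)) + (1 - pp g x) * ln x
  <= ln x - e * (1 - x) - e^+2 * (1 - x)^+2 / (4 * pp g x).
Proof.
have hp := pp_gt0 g0 g1 x0; have hpv := pv1 e0 e1 g0 g1 eg x0 x1.
have v0 := vv_ge0 e0 e1 g0 g1 eg x0 x1; have v1 := vv_le e0 e1 g0 g1 eg x0 x1.
set P := pp g x in hp hpv *; set v := vv e g x in hpv v0 v1 *.
rewrite lnM ?posrE //; last by lra.
have h := ln1m_le v0 v1.
have h2 : P * ln (1 - v) <= P * (- v - v^+2 / 4%:R) by rewrite ler_pM2l.
have h3 : P * (- v - v^+2 / 4%:R) = - (P * v) - (P * v)^+2 / (4 * P) by field; nz.
rewrite h3 hpv in h2.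
lra.
Qed.

Lemma k_ph1 (R : realType) (e g x : R) (e0 : 0 < e) (e1 : e < 1/2) (g0 : 0 < g) (g1 : g < 1/2) (eg : 4 * e <= g)
  (x0 : 0 < x) (x1 : x < 1) :
  pp g x * ((1 - x * (1 - vv e g x)) / (x * (1 - vv e g x))) + (1 - pp g x) * ((1 - x) / x)
  <= (1 + 2 * e) * ((1 - x) / x).
Proof.
have hp := pp_gt0 g0 g1 x0; have hpv := pv1 e0 e1 g0 g1 eg x0 x1.
have v0 := vv_ge0 e0 e1 g0 g1 eg x0 x1; have v1 := vv_le e0 e1 g0 g1 eg x0 x1.
set P := pp g x in hp hpv *; set v := vv e g x in hpv v0 v1 *.
have -> : P * ((1 - x * (1 - v)) / (x * (1 - v))) + (1 - P) * ((1 - x) / x)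
   = (1 - x) / x + (P * v) / (x * (1 - v)) by field; nz.
rewrite hpv.
have -> : e * (1 - x) / (x * (1 - v)) = ((1 - x) / x) * (e / (1 - v)) by field; nz.
have r0 : 0 <= (1 - x) / x by apply: divr_ge0; lra.
have : e / (1 - v) <= 2 * e by rewrite ler_pdivrMr; nra.
move=> h; have := ler_wpM2l r0 h; lra.
Qed.

Lemma m_ph1 (R : realType) (e g x : R) (e0 : 0 < e) (e1 : e < 1/2) (g0 : 0 < g) (g1 : g < 1/2) (eg : 4 * e <= g)
  (x0 : 0 < x) (x1 : x < 1) :
  pp g x * (x * (1 - vv e g x) / (1 - x * (1 - vv e g x))) + (1 - pp g x) * (x / (1 - x))
  <= (1 - e / 2) * (x / (1 - x)).
Proof.
have hp := pp_gt0 g0 g1 x0; have hpv := pv1 e0 e1 g0 g1 eg x0 x1.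
have v0 := vv_ge0 e0 e1 g0 g1 eg x0 x1; have v1 := vv_le e0 e1 g0 g1 eg x0 x1.
have hx := pp_gex g0 g1 (ltW x0).
set P := pp g x in hp hpv hx *; set v := vv e g x in hpv v0 v1 *.
have D0 : 0 < 1 - x + x * v by have := mulr_ge0 (ltW x0) v0; lra.
have -> : P * (x * (1 - v) / (1 - x * (1 - v))) + (1 - P) * (x / (1 - x))
   = x / (1 - x) - (x / (1 - x)) * (P * v / (1 - x + x * v)).
  have -> : 1 - x * (1 - v) = 1 - x + x * v by ring.
  field; nz.
rewrite hpv.
have r0 : 0 <= x / (1 - x) by apply: divr_ge0; lra.
have xv : x * v <= 2 * (P * v) by nra.
rewrite hpv in xv.
have xv2 : x * v <= 1 - x by nra.
have xv3 := ler_wpM2l (ltW e0) xv2.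
have : e / 2 <= e * (1 - x) / (1 - x + x * v) by rewrite ler_pdivlMr //; lra.
move=> h; have := ler_wpM2l r0 h; lra.
Qed.

Lemma f_ph1 (R : realType) (g x : R) (g0 : 0 < g) (g1 : g < 1/2) (x0 : 0 < x) (x1 : x < 1) :
  1 / (6%:R * g) - x / (6%:R * g^+2) <= (1 - x)^+2 / pp g x.
Proof.
have hp := pp_gt0 g0 g1 x0.
have r0 : 0 <= (1 - x)^+2 / pp g x by apply: divr_ge0; [apply: sqr_ge0 | lra].
case: (leP g x) => hx.
  have : 1 / (6%:R * g) - x / (6%:R * g^+2) = (g - x) / (6%:R * g^+2) by field; nz.
  move=> ->; have : (g - x) / (6%:R * g^+2) <= 0.
    by rewrite pmulr_lle0 ?invr_gt0; [lra | apply: mulr_gt0; [lra | apply: exprn_gt0]].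
  lra.
have h1 : x / (6%:R * g^+2) >= 0 by apply: divr_ge0; [lra | apply: mulr_ge0; [lra | apply: sqr_ge0]].
suff : 1 / (6%:R * g) <= (1 - x)^+2 / pp g x by lra.
rewrite ler_pdivlMr // mul1r mulrC ler_pdivrMr; last by lra.
rewrite /pp. clear r0 h1.
have a : 1/4 <= (1 - x)^+2 by rewrite expr2; nra.
have b : 0 <= 6%:R * g by lra.
have := ler_wpM2r b a. have : 0 <= g * x by apply: mulr_ge0; lra.
lra.
Qed.

Definition ww (R : realType) (e g x : R) := e * (1 - x) / pp g (1 - x).

Lemma qw2 (R : realType) (e g x : R) (e0 : 0 < e) (e1 : e < 1/2) (g0 : 0 < g) (g1 : g < 1/2) (eg : 4 * e <= g)
  (x0 : 0 < x) (x1 : x < 1) :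
  pp g (1 - x) * ww e g x = e * (1 - x).
Proof.
have hp : 0 < pp g (1 - x) by apply: pp_gt0 => //; lra.
rewrite /ww mulrCA divff ?mulr1 //; exact: lt0r_neq0.
Qed.

Lemma ww_bounds (R : realType) (e g x : R) (e0 : 0 < e) (e1 : e < 1/2) (g0 : 0 < g) (g1 : g < 1/2) (eg : 4 * e <= g)
  (x0 : 0 < x) (x1 : x < 1) :
  0 <= ww e g x /\ ww e g x <= 2 * e /\ ww e g x <= (1 - x) / 2.
Proof.
have hp : 0 < pp g (1 - x) by apply: pp_gt0 => //; lra.
have hq := qw2 e0 e1 g0 g1 eg x0 x1.
have hx : (1 - x) / 2 <= pp g (1 - x) by apply: pp_gex => //; lra.
have hg : g / 2 <= pp g (1 - x) by apply: pp_ge => //; lra.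
set q := pp g (1 - x) in hp hq hx hg *; set w := ww e g x in hq *.
have w0 : 0 <= w by rewrite /w /ww; apply: divr_ge0; [apply: mulr_ge0; lra | exact: ltW hp].
split => //; split.
  have : q * w <= q * (2 * e) by rewrite hq; nra.
  by rewrite ler_pM2l.
have : q * w <= q * ((1 - x) / 2) by rewrite hq; nra.
by rewrite ler_pM2l.
Qed.

Lemma ln_ph2 (R : realType) (e g x : R) (e0 : 0 < e) (e1 : e < 1/2) (g0 : 0 < g) (g1 : g < 1/2) (eg : 4 * e <= g)
  (x0 : 0 < x) (x1 : x < 1) :
  pp g (1 - x) * ln (x * (1 + ww e g x)) + (1 - pp g (1 - x)) * ln x <= ln x + e * (1 - x).
Proof.
have hp : 0 < pp g (1 - x) by apply: pp_gt0 => //; lra.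
have hq := qw2 e0 e1 g0 g1 eg x0 x1.
have [w0 _] := ww_bounds e0 e1 g0 g1 eg x0 x1.
set q := pp g (1 - x) in hp hq *; set w := ww e g x in hq w0 *.
rewrite lnM ?posrE //; last by lra.
have h := ln1p_le w0.
have h2 : q * ln (1 + w) <= q * w by rewrite ler_pM2l.
lra.
Qed.

Lemma k_ph2 (R : realType) (e g x : R) (e0 : 0 < e) (e1 : e < 1/2) (g0 : 0 < g) (g1 : g < 1/2) (eg : 4 * e <= g)
  (x0 : 0 < x) (x1 : x < 1) :
  pp g (1 - x) * ((1 - x * (1 + ww e g x)) / (x * (1 + ww e g x))) + (1 - pp g (1 - x)) * ((1 - x) / x)
  <= (1 - e / 2) * ((1 - x) / x).
Proof.
have hp : 0 < pp g (1 - x) by apply: pp_gt0 => //; lra.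
have hq := qw2 e0 e1 g0 g1 eg x0 x1.
have [w0 [w1 _]] := ww_bounds e0 e1 g0 g1 eg x0 x1.
set q := pp g (1 - x) in hp hq *; set w := ww e g x in hq w0 w1 *.
have -> : q * ((1 - x * (1 + w)) / (x * (1 + w))) + (1 - q) * ((1 - x) / x)
   = (1 - x) / x - (q * w) / (x * (1 + w)) by field; nz.
rewrite hq.
have -> : e * (1 - x) / (x * (1 + w)) = ((1 - x) / x) * (e / (1 + w)) by field; nz.
have r0 : 0 <= (1 - x) / x by apply: divr_ge0; lra.
have : e / 2 <= e / (1 + w) by rewrite ler_pdivlMr; [nra | lra].
move=> h; have := ler_wpM2l r0 h; lra.
Qed.

Definition ps (R : realType) (e k a m x : R) :=
  - ln x / e - k * ((1 - x) / x) / e + a - m * (x / (1 - x)).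

Lemma psi_step1 (R : realType) (e g x k0 k1 a0 a1 m0 m1 G : R)
  (e0 : 0 < e) (e1 : e < 1/2) (g0 : 0 < g) (g1 : g < 1/2) (eg : 4 * e <= g)
  (x0 : 0 < x) (x1 : x < 1) (hk1 : 0 <= k1) (hk : k0 = (1 + 2 * e) * k1)
  (ha : a0 = a1 + 1 + G) (hm1 : 0 <= m1)
  (hG : (G = 0 /\ (1 - e / 2) * m1 <= m0) \/
        (G = e / (24%:R * g) /\ (1 - e / 2) * m1 + e / (24%:R * g^+2) <= m0)) :
  ps e k0 a0 m0 x <=
  x + pp g x * ps e k1 a1 m1 (x * (1 - vv e g x)) + (1 - pp g x) * ps e k1 a1 m1 x.
Proof.
rewrite /ps.
have hp := pp_gt0 g0 g1 x0.
have hL := ln_ph1 e0 e1 g0 g1 eg x0 x1.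
have hK := k_ph1 e0 e1 g0 g1 eg x0 x1.
have hM := m_ph1 e0 e1 g0 g1 eg x0 x1.
set P := pp g x in hp hL hK hM *; set v := vv e g x in hL hK hM *.
set L1 := ln (x * (1 - v)) in hL *; set L0 := ln x in hL *.
set A1 := (1 - x * (1 - v)) / (x * (1 - v)) in hK *; set A0 := (1 - x) / x in hK *.
set B1 := x * (1 - v) / (1 - x * (1 - v)) in hM *; set B0 := x / (1 - x) in hM *.
have B0x : x <= B0.
  by rewrite /B0 ler_pdivlMr; [nra | lra].
have B00 : 0 <= B0 by lra.
have hK' := ler_wpM2l hk1 hK.
have hM' := ler_wpM2l hm1 hM.
have hL' : - (P * L1 + (1 - P) * L0) / e >= - L0 / e + (1 - x) + e * (1 - x)^+2 / (4 * P).
  have -> : - L0 / e + (1 - x) + e * (1 - x)^+2 / (4 * P)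
          = - (L0 - e * (1 - x) - e^+2 * (1 - x)^+2 / (4 * P)) / e by field; nz.
  by rewrite ler_pM2r ?invr_gt0 // lerN2.
have hK'' : - (k1 * (P * A1 + (1 - P) * A0)) / e >= - (k1 * ((1 + 2 * e) * A0)) / e.
  by rewrite ler_pM2r ?invr_gt0 // lerN2.
have E1 : P * (- L1 / e - k1 * A1 / e + a1 - m1 * B1) + (1 - P) * (- L0 / e - k1 * A0 / e + a1 - m1 * B0)
   = - (P * L1 + (1 - P) * L0) / e - (k1 * (P * A1 + (1 - P) * A0)) / e + a1
     - m1 * (P * B1 + (1 - P) * B0) by field; nz.
have E2 : - L0 / e - k0 * A0 / e = - L0 / e - (k1 * ((1 + 2 * e) * A0)) / e by rewrite hk; field; nz.
have F : 0 <= e * (1 - x)^+2 / (4 * P) - G + (m0 - (1 - e / 2) * m1) * B0.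
  have f := f_ph1 g0 g1 x0 x1.
  have ef : e * (1 - x)^+2 / (4 * P) = e / 4 * ((1 - x)^+2 / P) by field; nz.
  case: hG => [[-> hm] | [-> hm]].
    have : 0 <= e * (1 - x)^+2 / (4 * P).
      by apply: divr_ge0; [apply: mulr_ge0; [lra | apply: sqr_ge0] | lra].
    have : 0 <= (m0 - (1 - e / 2) * m1) * B0 by apply: mulr_ge0; lra.
    lra.
  have f' := ler_wpM2l (_ : 0 <= e / 4) f.
  have hB := ler_wpM2r B00 (_ : e / (24%:R * g^+2) <= m0 - (1 - e / 2) * m1).
  have xB := ler_wpM2l (_ : 0 <= e / (24%:R * g^+2)) B0x.
  have id1 : e / 4 * (1 / (6%:R * g) - x / (6%:R * g^+2)) = e / (24%:R * g) - e / (24%:R * g^+2) * x.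
    by field; nz.
  rewrite ef; rewrite id1 in f'.
  have : e / 4 * ((1 - x)^+2 / P) >= e / (24%:R * g) - e / (24%:R * g^+2) * x by apply: f'; lra.
  have : e / (24%:R * g^+2) * B0 <= (m0 - (1 - e / 2) * m1) * B0 by apply: hB; lra.
  have : e / (24%:R * g^+2) * x <= e / (24%:R * g^+2) * B0.
    apply: xB; apply: divr_ge0; [lra | apply: mulr_ge0; [lra | apply: sqr_ge0]].
  lra.
rewrite ha.
lra.
Qed.

Lemma psi_step2 (R : realType) (e g x k0 k1 a : R)
  (e0 : 0 < e) (e1 : e < 1/2) (g0 : 0 < g) (g1 : g < 1/2) (eg : 4 * e <= g)
  (x0 : 0 < x) (x1 : x < 1) (hk1 : 0 <= k1) (hk : k0 = (1 - e / 2) * k1) :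
  ps e k0 a 0 x <=
  (1 - x) + pp g (1 - x) * ps e k1 a 0 (x * (1 + ww e g x)) + (1 - pp g (1 - x)) * ps e k1 a 0 x.
Proof.
rewrite /ps.
have hp : 0 < pp g (1 - x) by apply: pp_gt0 => //; lra.
have hL := ln_ph2 e0 e1 g0 g1 eg x0 x1.
have hK := k_ph2 e0 e1 g0 g1 eg x0 x1.
set P := pp g (1 - x) in hp hL hK *; set v := ww e g x in hL hK *.
set L1 := ln (x * (1 + v)) in hL *; set L0 := ln x in hL *.
set A1 := (1 - x * (1 + v)) / (x * (1 + v)) in hK *; set A0 := (1 - x) / x in hK *.
have hK' := ler_wpM2l hk1 hK.
have hL' : - (P * L1 + (1 - P) * L0) / e >= - L0 / e - (1 - x).
  have -> : - L0 / e - (1 - x) = - (L0 + e * (1 - x)) / e by field; nz.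
  by rewrite ler_pM2r ?invr_gt0 // lerN2.
have hK'' : - (k1 * (P * A1 + (1 - P) * A0)) / e >= - (k1 * ((1 - e / 2) * A0)) / e.
  by rewrite ler_pM2r ?invr_gt0 // lerN2.
rewrite !mul0r !subr0.
have E1 : P * (- L1 / e - k1 * A1 / e + a)
        + (1 - P) * (- L0 / e - k1 * A0 / e + a)
   = - (P * L1 + (1 - P) * L0) / e - (k1 * (P * A1 + (1 - P) * A0)) / e + a by field; nz.
have E2 : - L0 / e - k0 * A0 / e = - L0 / e - (k1 * ((1 - e / 2) * A0)) / e by rewrite hk; field; nz.
lra.
Qed.


Definition T1 (T : nat) := (T %/ 100)%N.
Definition t0 (T : nat) := ((T1 T) %/ 2 + 1)%N.
Definition sg (R : realType) (e : R) := 1 - e / 2.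
Definition kap (R : realType) (e : R) (T t : nat) :=
  sg e ^+ (T + 1 - maxn t (T1 T + 1)) * (1 + 2 * e) ^+ (T1 T + 1 - t).
Definition acf (R : realType) (e g : R) (T t : nat) :=
  (T1 T + 1 - t)%:R + e / (24%:R * g) * (T1 T + 1 - maxn t (t0 T))%:R.
Definition mu (R : realType) (e g : R) (T t : nat) :=
  if (t <= T1 T)%N then 1 / (12%:R * g^+2) * sg e ^+ (t0 T - t) else 0.

Lemma kap_ge0 (R : realType) (e : R) T t : 0 < e -> e < 1/2 -> 0 <= kap e T t.
Proof.
move=> e0 e1; rewrite /kap /sg; apply: mulr_ge0; apply: exprn_ge0; lra.
Qed.

Lemma mu_ge0 (R : realType) (e g : R) T t : 0 < e -> e < 1/2 -> 0 < g -> 0 <= mu e g T t.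
Proof.
move=> e0 e1 g0; rewrite /mu; case: ifP => // _.
apply: mulr_ge0; last by rewrite /sg; apply: exprn_ge0; lra.
apply: divr_ge0 => //; apply: mulr_ge0 => //; apply: exprn_ge0; lra.
Qed.

Lemma coef_ph1 (R : realType) (e g : R) T t : 0 < e -> e < 1/2 -> 0 < g ->
  (t <= T1 T)%N ->
  kap e T t = (1 + 2 * e) * kap e T t.+1 /\
  exists G, acf e g T t = acf e g T t.+1 + 1 + G /\
  ((G = 0 /\ (1 - e / 2) * mu e g T t.+1 <= mu e g T t) \/
   (G = e / (24%:R * g) /\ (1 - e / 2) * mu e g T t.+1 + e / (24%:R * g^+2) <= mu e g T t)).
Proof.
move=> e0 e1 g0 ht; split.
  rewrite /kap.
  have -> : maxn t.+1 (T1 T + 1) = maxn t (T1 T + 1) by lia.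
  have -> : (T1 T + 1 - t = (T1 T + 1 - t.+1).+1)%N by lia.
  by rewrite exprS mulrCA.
have hM : 0 <= 1 / (12%:R * g^+2).
  apply: divr_ge0 => //; apply: mulr_ge0 => //; apply: exprn_ge0; lra.
case: (leqP (t0 T) t) => h0.
- exists (e / (24%:R * g)); split.
    rewrite /acf.
    have -> : maxn t (t0 T) = t by lia.
    have -> : maxn t.+1 (t0 T) = t.+1 by lia.
    have -> : (T1 T + 1 - t = (T1 T + 1 - t.+1).+1)%N by lia.
    rewrite !mulrS; lra.
  right; split => //.
  rewrite /mu ht.
  have -> : (t0 T - t = 0)%N by lia.
  have -> : (t0 T - t.+1 = 0)%N by lia.
  rewrite expr0 mulr1.
  have eq1 : e / (24%:R * g^+2) = e / 2 * (1 / (12%:R * g^+2)).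
    by field; nz.
  case: ifP => _; rewrite ?mulr1 eq1.
    lra.
  have : e / 2 * (1 / (12%:R * g ^+ 2)) <= 1 / (12%:R * g ^+ 2).
    by rewrite ler_piMl //; lra.
  lra.
- exists 0; split.
    rewrite /acf.
    have -> : maxn t (t0 T) = t0 T by lia.
    have -> : maxn t.+1 (t0 T) = t0 T by lia.
    have -> : (T1 T + 1 - t = (T1 T + 1 - t.+1).+1)%N by lia.
    rewrite !mulrS; lra.
  left; split => //.
  rewrite /mu ht.
  have sg0 : 0 <= sg e by rewrite /sg; lra.
  case: ifP => _.
    have -> : (t0 T - t = (t0 T - t.+1).+1)%N by lia.
    by rewrite [sg e ^+ (_.+1)]exprS mulrCA.
  rewrite mulr0; apply: mulr_ge0 => //; exact: exprn_ge0.
Qed.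

Lemma coef_ph2 (R : realType) (e g : R) T t :
  (T1 T < t)%N -> (t <= T)%N ->
  kap e T t = (1 - e / 2) * kap e T t.+1 /\ acf e g T t = 0 /\ acf e g T t.+1 = 0 /\
  mu e g T t = 0 /\ mu e g T t.+1 = 0.
Proof.
move=> ht htT; split.
  rewrite /kap.
  have -> : maxn t.+1 (T1 T + 1) = t.+1 by lia.
  have -> : maxn t (T1 T + 1) = t by lia.
  have -> : (T1 T + 1 - t = 0)%N by lia.
  have -> : (T1 T + 1 - t.+1 = 0)%N by lia.
  have -> : (T + 1 - t = (T + 1 - t.+1).+1)%N by lia.
  by rewrite exprS /sg mulrA.
rewrite /acf /mu.
have -> : (T1 T + 1 - t = 0)%N by lia.
have -> : (T1 T + 1 - t.+1 = 0)%N by lia.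
have -> : (T1 T + 1 - maxn t (t0 T) = 0)%N by lia.
have -> : (T1 T + 1 - maxn t.+1 (t0 T) = 0)%N by lia.
have -> : (t <= T1 T)%N = false by apply/negbTE; rewrite -ltnNge.
have -> : (t.+1 <= T1 T)%N = false by apply/negbTE; rewrite -ltnNge; lia.
by rewrite !mulr0 !addr0.
Qed.

Lemma sum2 (R : realType) (F : 'I_2 -> R) : \sum_(i < 2) F i = F ord0 + F ord_max.
Proof. by rewrite big_ord_recl big_ord1; congr (_ + F _); apply/val_inj. Qed.

Definition InvS (R : realType) (pi : 'I_2 -> R) :=
  0 < pi ord0 /\ pi ord0 < 1 /\ pi ord_max = 1 - pi ord0.

Lemma mix0 (R : realType) (g : R) (pi : 'I_2 -> R) : mix g pi ord0 = pp g (pi ord0).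
Proof. by []. Qed.

Lemma mix1 (R : realType) (g : R) (pi : 'I_2 -> R) : InvS pi -> mix g pi ord_max = pp g (1 - pi ord0).
Proof. by case=> _ [_ h]; rewrite /mix h. Qed.

Lemma tp1 (R : realType) T t : (t <= T1 T)%N ->
  two_phase R T t ord0 = 1 /\ two_phase R T t ord_max = 0.
Proof. by rewrite /two_phase /T1 => ->. Qed.

Lemma tp2 (R : realType) T t : (T1 T < t)%N ->
  two_phase R T t ord0 = 0 /\ two_phase R T t ord_max = 1.
Proof. by rewrite /two_phase /T1 ltnNge => /negbTE ->. Qed.

Lemma n01 : (ord_max == ord0 :> 'I_2) = false. Proof. by []. Qed.
Lemma n10 : (ord0 == ord_max :> 'I_2) = false. Proof. by []. Qed.

Lemma upd_ph1 (R : realType) (e g : R) T t (pi : 'I_2 -> R)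
  (e0 : 0 < e) (e1 : e < 1/2) (g0 : 0 < g) (g1 : g < 1/2) (eg : 4 * e <= g) :
  InvS pi -> (t <= T1 T)%N ->
  update e g pi (two_phase R T t) ord0 ord0 = pi ord0 * (1 - vv e g (pi ord0)) /\
  update e g pi (two_phase R T t) ord0 ord_max = 1 - pi ord0 * (1 - vv e g (pi ord0)) /\
  update e g pi (two_phase R T t) ord_max ord0 = pi ord0 /\
  update e g pi (two_phase R T t) ord_max ord_max = 1 - pi ord0.
Proof.
move=> [x0 [x1 hy]] ht; have [h0 h1] := tp1 R ht.
have hp := pp_gt0 g0 g1 x0.
have hq : 0 < pp g (1 - pi ord0) by apply: pp_gt0 => //; lra.
rewrite /update /lhat !sum2 h0 h1 !eqxx n01 n10 hy mix0 (mix1 _ (conj x0 (conj x1 hy))).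
rewrite /vv /=; set x := pi ord0 in x0 x1 hp hq *.
split; first by field; nz.
split; first by field; nz.
split; first by field; nz.
by field; nz.
Qed.

Lemma upd_ph2 (R : realType) (e g : R) T t (pi : 'I_2 -> R)
  (e0 : 0 < e) (e1 : e < 1/2) (g0 : 0 < g) (g1 : g < 1/2) (eg : 4 * e <= g) :
  InvS pi -> (T1 T < t)%N ->
  update e g pi (two_phase R T t) ord_max ord0 = pi ord0 * (1 + ww e g (pi ord0)) /\
  update e g pi (two_phase R T t) ord_max ord_max = 1 - pi ord0 * (1 + ww e g (pi ord0)) /\
  update e g pi (two_phase R T t) ord0 ord0 = pi ord0 /\
  update e g pi (two_phase R T t) ord0 ord_max = 1 - pi ord0.
Proof.
move=> [x0 [x1 hy]] ht; have [h0 h1] := tp2 R ht.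
have hp := pp_gt0 g0 g1 x0.
have hq : 0 < pp g (1 - pi ord0) by apply: pp_gt0 => //; lra.
rewrite /update /lhat !sum2 h0 h1 !eqxx n01 n10 hy mix0 (mix1 _ (conj x0 (conj x1 hy))).
rewrite /ww /=; set x := pi ord0 in x0 x1 hp hq *.
split; first by field; nz.
split; first by field; nz.
split; first by field; nz.
by field; nz.
Qed.

Definition Vf (R : realType) (e g : R) (T t : nat) (x : R) :=
  g / 2 * (T + 1 - t)%:R + (1 - g) * ps e (kap e T t) (acf e g T t) (mu e g T t) x.

Lemma T1_le T : (T1 T <= T)%N.
Proof. exact: leq_div. Qed.

Lemma pp_compl (R : realType) (g x : R) : pp g (1 - x) = 1 - pp g x.
Proof. rewrite /pp; lra. Qed.

Lemma dp (R : realType) (e g : R) (T : nat)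
  (e0 : 0 < e) (e1 : e < 1/2) (g0 : 0 < g) (g1 : g < 1/2) (eg : 4 * e <= g) :
  forall n t (pi : 'I_2 -> R), InvS pi -> (t + n = T + 1)%N ->
  Vf e g T t (pi ord0) <= expLoss e g (two_phase R T) n t pi.
Proof.
elim=> [|n IH] t pi hI htn.
  rewrite addn0 in htn; subst t.
  have [x0 [x1 _]] := hI.
  rewrite /Vf /= subnn mulr0 add0r.
  have -> : kap e T (T + 1) = 1.
    rewrite /kap; have := T1_le T => hT.
    have -> : maxn (T + 1) (T1 T + 1) = (T + 1)%N by lia.
    by rewrite subnn (_ : (T1 T + 1 - (T + 1) = 0)%N) ?expr0 ?mulr1 //; lia.
  have -> : acf e g T (T + 1) = 0.
    rewrite /acf; have := T1_le T => hT.
    rewrite (_ : (T1 T + 1 - (T + 1) = 0)%N); last by lia.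
    by rewrite (_ : (T1 T + 1 - maxn (T + 1) (t0 T) = 0)%N) ?mulr0 ?addr0 //; lia.
  have -> : mu e g T (T + 1) = 0.
    rewrite /mu; have := T1_le T => hT.
    by rewrite (_ : (T + 1 <= T1 T)%N = false) //; apply/negbTE; rewrite -ltnNge; lia.
  rewrite /ps mul0r subr0 addr0 mul1r.
  have h := negln_le x0.
  have : - ln (pi ord0) / e - (1 - pi ord0) / pi ord0 / e <= 0.
    rewrite -mulrBl; apply: mulr_le0_ge0; [lra | by rewrite invr_ge0; lra].
  move=> h2; apply: mulr_ge0_le0 => //; lra.
have htT : (t <= T)%N by lia.
have htn' : (t.+1 + n = T + 1)%N by lia.
have hI' := hI; case: hI' => [x0 [x1 hy]].
rewrite /= !sum2 mix0 (mix1 _ hI) pp_compl.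
have hp := pp_gt0 g0 g1 x0.
have hq : 0 < pp g (1 - pi ord0) by apply: pp_gt0 => //; lra.
rewrite pp_compl in hq.
have hP : pp g (pi ord0) = (1 - g) * pi ord0 + g / 2 by [].
have hN : (T + 1 - t)%:R = (T + 1 - t.+1)%:R + 1 :> R.
  by rewrite (_ : (T + 1 - t = (T + 1 - t.+1).+1)%N) ?natr1 //; lia.
case: (leqP t (T1 T)) => ht.
- have [u00 [u01 [u10 u11]]] := upd_ph1 e0 e1 g0 g1 eg hI ht.
  have [l0 l1] := tp1 R ht.
  have v0 := vv_ge0 e0 e1 g0 g1 eg x0 x1; have v1 := vv_le e0 e1 g0 g1 eg x0 x1.
  have I0 : InvS (update e g pi (two_phase R T t) ord0).
    rewrite /InvS u00 u01; split; first by apply: mulr_gt0 => //; lra.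
    by split => //; nra.
  have I1 : InvS (update e g pi (two_phase R T t) ord_max).
    by rewrite /InvS u10 u11.
  have h0 := IH _ _ I0 htn'; have h1 := IH _ _ I1 htn'.
  rewrite u00 in h0; rewrite u10 in h1.
  have h0' := ler_wpM2l (ltW hp) h0.
  have h1' := ler_wpM2l (ltW hq) h1.
  rewrite l0 l1.
  have [hk [G [ha hG]]] := coef_ph1 (g:=g) (T:=T) e0 e1 g0 ht.
  have st := psi_step1 e0 e1 g0 g1 eg x0 x1 (kap_ge0 T t.+1 e0 e1) hk ha
    (mu_ge0 T t.+1 e0 e1 g0) hG.
  have st' := ler_wpM2l (_ : 0 <= 1 - g) st.
  move: h0' h1' st'; rewrite /Vf hN.
  set N := (T + 1 - t.+1)%:R.
  set A := ps e _ _ _ (pi ord0 * (1 - vv e g (pi ord0))).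
  set B := ps e _ _ _ (pi ord0).
  set C := ps e _ _ _ (pi ord0).
  move=> h0' h1' st'.
  have : 0 <= 1 - g by lra.
  move/st' => {}st'.
  lra.
- have [u10 [u11 [u00 u01]]] := upd_ph2 e0 e1 g0 g1 eg hI ht.
  have [l0 l1] := tp2 R ht.
  have [w0 [w1 w2]] := ww_bounds e0 e1 g0 g1 eg x0 x1.
  have I0 : InvS (update e g pi (two_phase R T t) ord0).
    by rewrite /InvS u00 u01.
  have I1 : InvS (update e g pi (two_phase R T t) ord_max).
    rewrite /InvS u10 u11; split; first by apply: mulr_gt0 => //; lra.
    by split => //; nra.
  have h0 := IH _ _ I0 htn'; have h1 := IH _ _ I1 htn'.
  rewrite u00 in h0; rewrite u10 in h1.
  have h0' := ler_wpM2l (ltW hp) h0.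
  have h1' := ler_wpM2l (ltW hq) h1.
  rewrite l0 l1.
  have [hk [a0 [a1 [m0 m1]]]] := coef_ph2 e g ht htT.
  have st := psi_step2 (acf e g T t) e0 e1 g0 g1 eg x0 x1 (kap_ge0 T t.+1 e0 e1) hk.
  have st' := ler_wpM2l (_ : 0 <= 1 - g) st.
  move: h0' h1' st'; rewrite /Vf hN a0 a1 m0 m1 pp_compl.
  move=> h0' h1' st'.
  have : 0 <= 1 - g by lra.
  move/st' => {}st'.
  lra.
Qed.


Lemma bern (R : realType) (u : R) k : 0 <= u -> 1 + k%:R * u <= (1 + u) ^+ k.
Proof.
move=> u0; elim: k => [|k IH]; first by rewrite expr0 mul0r addr0.
rewrite exprS -natr1.
have h : 0 <= 1 + u by lra.
have := ler_wpM2l h IH.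
have : 0 <= k%:R * u * u by apply: mulr_ge0 => //; apply: mulr_ge0.
nra.
Qed.

Lemma sgk (R : realType) (e : R) k : 0 < e -> e < 1/2 ->
  sg e ^+ k * (1 + k%:R * (e / 2)) <= 1.
Proof.
move=> e0 e1.
have s0 : 0 <= sg e ^+ k by apply: exprn_ge0; rewrite /sg; lra.
have := ler_wpM2l s0 (bern k (_ : 0 <= e / 2)).
have : sg e ^+ k * (1 + e / 2) ^+ k <= 1.
  rewrite -exprMn; apply: exprn_ile1.
    by apply: mulr_ge0; rewrite /sg; lra.
  rewrite /sg; nra.
move=> h1 h2; apply: le_trans (h2 _) h1; lra.
Qed.

Lemma pow_mono3 (R : realType) (a b : R) : 0 <= a -> 0 <= b -> a ^+ 3 <= b ^+ 3 -> a <= b.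
Proof. move=> a0 b0; by rewrite ler_pXn2r // nnegrE. Qed.

Lemma big_bound (R : realType) (e Tr C W : R) (k : nat) : 0 < e -> e < 1/2 ->
  0 < C -> 0 <= W -> 64%:R * C ^+ 6 <= W -> W ^+ 3 <= Tr ^+ 2 -> 0 < Tr ->
  1 <= e ^+ 3 * Tr ^+ 2 -> Tr <= C * k%:R ->
  sg e ^+ (6 * k) <= e ^+ 2.
Proof.
move=> e0 e1 C0 W0 hC hW T0 hN hk.
set Z := Tr ^+ 6 * e ^+ 8.
have Z0 : 0 <= Z by apply: mulr_ge0; apply: exprn_ge0; lra.
have hZ3 : Tr ^+ 2 <= Z ^+ 3.
  have -> : Z ^+ 3 = (e ^+ 3 * Tr ^+ 2) ^+ 8 * Tr ^+ 2 by rewrite /Z; ring.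
  have a : 1 <= (e ^+ 3 * Tr ^+ 2) ^+ 8 by apply: exprn_ege1.
  have b : 0 <= Tr ^+ 2 by apply: exprn_ge0; lra.
  nra.
have hZ : W <= Z by exact: pow_mono3 W0 Z0 (le_trans hW hZ3).
have ke : Tr * e / C <= k%:R * e.
  rewrite ler_pdivrMr //.
  have := ler_wpM2r (ltW e0) hk; lra.
have ke0 : 0 < k%:R * e by apply: lt_le_trans ke; apply: divr_gt0 => //; apply: mulr_gt0.
have hke : 64%:R <= (k%:R * e) ^+ 6 * e ^+ 2.
  have h1 : (Tr * e / C) ^+ 6 <= (k%:R * e) ^+ 6.
    rewrite ler_pXn2r // nnegrE; last exact: ltW.
    by apply: divr_ge0; [apply: mulr_ge0; lra | lra].
  have h2 : (Tr * e / C) ^+ 6 * e ^+ 2 = Z / C ^+ 6 by rewrite /Z; field; nz.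
  have h3 : 64%:R <= Z / C ^+ 6.
    rewrite ler_pdivlMr; last by apply: exprn_gt0; lra.
    exact: le_trans hC hZ.
  apply: le_trans h3 _; rewrite -h2; apply: ler_wpM2r => //; exact: exprn_ge0 (ltW e0).
set s := sg e ^+ k.
have s0 : 0 <= s by apply: exprn_ge0; rewrite /sg; lra.
have hs : s * (k%:R * e) <= 2.
  have := sgk k e0 e1; rewrite -/s => h.
  have : 0 <= s by [].
  nra.
have hs6 : s ^+ 6 * (k%:R * e) ^+ 6 <= 64%:R.
  rewrite -exprMn (_ : (64%:R : R) = 2 ^+ 6); last by rewrite -natrX.
  by rewrite ler_pXn2r // nnegrE; [apply: mulr_ge0 => //; exact: ltW | lra].
rewrite mulnC exprM -/s.
have p6 : 0 < (k%:R * e) ^+ 6 by apply: exprn_gt0.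
rewrite -(ler_pM2r p6); apply: le_trans hs6 _.
by rewrite mulrC; apply: le_trans hke; rewrite le_eqVlt eqxx.
Qed.

Lemma num_facts (R : realType) :
  (64%:R : R) * 2400%:R ^+ 6 <= 10%:R ^+ 26 /\ ((10%:R : R) ^+ 26) ^+ 3 <= (10%:R ^+ 40) ^+ 2.
Proof.
have t0 : (0 : R) <= 10%:R by rewrite ler0n.
have t1 : (1 : R) <= 10%:R by rewrite ler1n.
split.
  rewrite (_ : (26 = 2 + 4 * 6)%N) // exprD exprM.
  apply: ler_pM; [by rewrite ler0n | by apply: exprn_ge0; rewrite ler0n | by rewrite -natrX ler_nat |].
  have a : (0:R) <= 2400%:R by rewrite ler0n.
  have b : (0:R) <= 10%:R ^+ 4 by apply: exprn_ge0.
  have c : (2400%:R : R) <= 10%:R ^+ 4 by rewrite -natrX ler_nat.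
  by rewrite ler_pXn2r // nnegrE.
rewrite -!exprM (_ : (40 * 2 = 26 * 3 + 2)%N) // exprD.
rewrite -[X in X <= _]mulr1; apply: ler_wpM2l; first exact: exprn_ge0.
exact: exprn_ege1.
Qed.


Lemma sg4 (R : realType) (e : R) : 0 < e -> e < 1/2 -> sg e ^+ 4 * (1 + 2 * e) <= 1.
Proof.
move=> e0 e1; rewrite /sg.
set u := e / 2.
have u0 : 0 < u by rewrite /u; lra.
have u1 : u <= 1/4 by rewrite /u; lra.
have -> : 1 + 2 * e = 1 + 4 * u by rewrite /u; lra.
have -> : (1 - u) ^+ 4 * (1 + 4 * u) = 1 - u^+2 * (10%:R - 20%:R * u + 15%:R * u^+2 - 4%:R * u^+3).
  by ring.
have h : 0 <= 10%:R - 20%:R * u + 15%:R * u^+2 - 4%:R * u^+3.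
  have a : u^+2 <= 1/16 by rewrite expr2; nra.
  have b : 0 <= u^+3 by apply: exprn_ge0; lra.
  have c : u^+3 <= u^+2 by rewrite !exprS expr0; nra.
  nra.
have : 0 <= u^+2 * (10%:R - 20%:R * u + 15%:R * u^+2 - 4%:R * u^+3).
  by apply: mulr_ge0 => //; apply: sqr_ge0.
lra.
Qed.

Lemma ps_half (R : realType) (e k a m : R) : 0 < e ->
  ps e k a m (1 / 2) = - ln (1 / 2) / e - k / e + a - m.
Proof. move=> e0; rewrite /ps; field; nz. Qed.

Lemma min2_le (R : realType) (F : 'I_2 -> R) (x : R) :
  \big[Num.min/x]_(i < 2) F i <= F ord0.
Proof. by rewrite big_ord_recl ge_min lexx. Qed.

Lemma sum_tp0 (R : realType) T : \sum_(1 <= t < T.+1) two_phase R T t ord0 = (T1 T)%:R.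
Proof.
have hT := T1_le T.
have A : \sum_(1 <= t < (T1 T).+1) two_phase R T t ord0 = (T1 T)%:R.
  rewrite (eq_big_nat _ _ (F2 := fun _ => 1)); last first.
    by move=> i /andP [_ hi]; rewrite /two_phase /T1; rewrite ltnS in hi; rewrite hi.
  by rewrite sumr_const_nat subn1.
have B : \sum_((T1 T).+1 <= t < T.+1) two_phase R T t ord0 = 0.
  rewrite (eq_big_nat _ _ (F2 := fun _ => 0)); last first.
    move=> i /andP [hi _]; rewrite /two_phase /T1.
    by rewrite (_ : (i <= T %/ 100)%N = false) //; apply/negbTE; rewrite -ltnNge; exact: hi.
  by rewrite sumr_const_nat mul0rn.
rewrite (big_cat_nat (n := (T1 T).+1)); try lia.
by rewrite A B; apply: addr0.
Qed.

Unset Implicit Arguments.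

Lemma kap1_le (R : realType) (e : R) T : 0 < e -> e < 1/2 -> T = (T1 T * 100)%N ->
  sg e ^+ (T1 T %/ 2) <= e ^+ 2 -> kap e T 1 <= e ^+ 2.
Proof.
move=> e0 e1 hd' sgm.
have sg0 : 0 <= sg e by rewrite /sg; lra.
have sg1 : sg e <= 1 by rewrite /sg; lra.
rewrite /kap.
have -> : (T + 1 - maxn 1 (T1 T + 1) = 4 * T1 T + (T - 5 * T1 T))%N by lia.
have -> : (T1 T + 1 - 1 = T1 T)%N by lia.
rewrite exprD exprM mulrAC -exprMn.
have a : 0 <= (sg e ^+ 4 * (1 + 2 * e)) ^+ T1 T.
  by apply: exprn_ge0; apply: mulr_ge0; [apply: exprn_ge0 | lra].
have b : (sg e ^+ 4 * (1 + 2 * e)) ^+ T1 T <= 1.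
  apply: exprn_ile1; [apply: mulr_ge0; [exact: exprn_ge0 | lra] | exact: sg4].
have c : sg e ^+ (T - 5 * T1 T) <= e ^+ 2.
  apply: le_trans sgm; apply: ler_wiXn2l => //; lia.
have d : 0 <= sg e ^+ (T - 5 * T1 T) by apply: exprn_ge0.
have := ler_wpM2r d b; rewrite mul1r => h.
exact: le_trans h c.
Qed.

Lemma mu1_le (R : realType) (e g : R) T : 0 < e -> e < 1/2 -> 0 < g -> e <= g ->
  (1 <= T1 T)%N -> sg e ^+ (T1 T %/ 2) <= e ^+ 2 -> mu e g T 1 <= 1.
Proof.
move=> e0 e1 g0 eg h1 sgm.
rewrite /mu h1 /t0 (_ : (T1 T %/ 2 + 1 - 1 = T1 T %/ 2)%N); last by lia.
have ge : e ^+ 2 <= g ^+ 2 by rewrite ler_pXn2r // nnegrE; lra.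
have g2 : 0 < 12%:R * g ^+ 2 by apply: mulr_gt0; [lra | apply: exprn_gt0].
rewrite mul1r mulrC ler_pdivrMr // mul1r.
apply: le_trans sgm _; apply: le_trans ge _.
have : 0 <= g ^+ 2 by apply: exprn_ge0; lra.
lra.
Qed.

Lemma acf1_eq (R : realType) (e g : R) T :
  acf e g T 1 = (T1 T)%:R + e / (24%:R * g) * (T1 T - T1 T %/ 2)%:R.
Proof.
rewrite /acf (_ : (T1 T + 1 - 1 = T1 T)%N); last by lia.
by rewrite (_ : (T1 T + 1 - maxn 1 (t0 T) = T1 T - T1 T %/ 2)%N) // /t0; lia.
Qed.

Lemma Hh_ge (R : realType) T : T = (T1 T * 100)%N ->
  (T%:R : R) / 200%:R <= (T1 T - T1 T %/ 2)%:R.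
Proof.
move=> hd'.
have : (T1 T <= 2 * (T1 T - T1 T %/ 2))%N by lia.
rewrite -(ler_nat R) natrM => h.
rewrite {1}hd' natrM; lra.
Qed.

Lemma final_ineq (R : realType) (e g Tr n1 L m k1 mu1 Hh ln2 : R) :
  0 < e -> 0 < g -> g < 1/2 -> 0 < Tr -> Tr = 100%:R * n1 -> Tr / 200%:R <= Hh -> 0 <= ln2 ->
  0 <= k1 -> k1 / e <= 1 -> 0 <= mu1 -> mu1 <= 1 -> 1 / e <= e * Tr / g -> 12%:R <= g * Tr ->
  g / 2 * Tr + (1 - g) * (ln2 / e - k1 / e + (n1 + e / (24%:R * g) * Hh) - mu1) <= L ->
  m <= n1 ->
  1 / 19200%:R * (1 / e) + 1 / 38400%:R * (e * Tr * 2%:R / g) + 1 / 4%:R * (g * Tr) <= L - m.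
Proof.
move=> e0 g0 g1 Tp TrN HhB l0 k0 K1 M0 M1 F6 F7 hL hm.
have F4 : e * Tr / (9600%:R * g) <= (1 - g) * (e / (24%:R * g) * Hh).
  have eg0 : 0 <= e / (24%:R * g) by apply: divr_ge0; [lra | apply: mulr_ge0; lra].
  have h1 := ler_wpM2l eg0 HhB.
  have h2 : 0 <= e / (24%:R * g) * Hh.
    apply: le_trans h1; apply: mulr_ge0 => //; apply: divr_ge0; lra.
  have -> : e * Tr / (9600%:R * g) = 1 / 2 * (e / (24%:R * g) * (Tr / 200%:R)) by field; nz.
  have : 1 / 2 * (e / (24%:R * g) * Hh) <= (1 - g) * (e / (24%:R * g) * Hh).
    by apply: ler_wpM2r => //; lra.
  have := ler_wpM2l (_ : 0 <= 1/2) h1.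
  lra.
have F1 : 0 <= (1 - g) * (ln2 / e) by apply: mulr_ge0; [lra | apply: divr_ge0; lra].
have F2 : (1 - g) * (k1 / e) <= 1.
  have : 0 <= k1 / e by apply: divr_ge0; lra.
  nra.
have F3 : (1 - g) * mu1 <= 1 by nra.
have F5 : g * Tr = 100%:R * (g * n1) by rewrite TrN; ring.
have E : e * Tr * 2%:R / g = 2%:R * (e * Tr / g) by field; nz.
have E2 : e * Tr / (9600%:R * g) = (e * Tr / g) / 9600%:R by field; nz.
rewrite E2 in F4; rewrite E.
lra.
Qed.


Theorem theorem3 (R : realType) (eta gamma : nat -> R) :
  (forall T : nat, (0 < T)%N -> (100 %| T)%N ->
     valid 2 (eta T) (gamma T) /\ nontrivial T (eta T) (gamma T)) ->
  exists c1 c2 c3 : R, 0 < c1 /\ 0 < c2 /\ 0 < c3 /\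
  exists T0 : nat, forall T : nat, (T0 <= T)%N -> (0 < T)%N -> (100 %| T)%N ->
    c1 * (1 / eta T) + c2 * (eta T * T%:R * 2%:R / gamma T) + c3 * (gamma T * T%:R)
    <= expRegret (eta T) (gamma T) (two_phase R T) T.
Proof.
move=> H.
exists (1 / 19200%:R), (1 / 38400%:R), (1 / 4%:R).
split; first lra. split; first lra. split; first lra.
exists (10 ^ 40)%N => T hT0 hT hd.
have [[e0 [e1 [g0 [g1 hv]]]] [hn1 hn2]] := H T hT hd.
move: e0 e1 g0 g1 hv hn1 hn2.
set e := eta T; set g := gamma T; set Tr := (T%:R : R).
move=> e0 e1 g0 g1 hv hn1 hn2.
have hTr : (10%:R ^+ 40 : R) <= Tr by rewrite /Tr -natrX ler_nat; exact: hT0.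
clear hT0.
have eg : 4 * e <= g by move: hv; rewrite ler_pdivrMr //; clear hTr; lra.
have T4 : (10000%:R : R) <= Tr.
  apply: le_trans hTr.
  have h1 : (10000%:R : R) <= 10%:R ^+ 4 by rewrite -natrX.
  apply: le_trans h1 _; by rewrite ler_eXn2l // ltr1n.
have [nf1 nf2] := num_facts R.
have WTr : ((10%:R : R) ^+ 26) ^+ 3 <= Tr ^+ 2.
  apply: le_trans nf2 _.
  have a : (0 : R) <= 10%:R ^+ 40 by apply: exprn_ge0; rewrite ler0n.
  have b : (0 : R) <= Tr by rewrite /Tr ler0n.
  by rewrite ler_pXn2r // nnegrE.
have W0 : (0 : R) <= 10%:R ^+ 26 by apply: exprn_ge0; rewrite ler0n.
move: (10%:R ^+ 26) W0 nf1 WTr => W W0 nf1 WTr.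
clear hTr nf2.
have Tpos : 0 < Tr by lra.
have N1 : 1 <= e ^+ 3 * Tr ^+ 2.
  have a0 : 0 < Tr `^ (-(2/3)) by apply: powR_gt0.
  have h : (Tr `^ (-(2/3))) ^+ 3 <= e ^+ 3.
    by rewrite ler_pXn2r // nnegrE; lra.
  rewrite -(powR_mulrn 3 (ltW a0)) -powRrM in h.
  have E : (-(2/3) * 3%:R : R) = - (2%:R) by field.
  rewrite E powR_invn in h; last by lra.
  have t2 : 0 < Tr ^+ 2 by apply: exprn_gt0.
  have := ler_wpM2r (ltW t2) h; rewrite mulVf //; exact: lt0r_neq0.
have N2 : g ^+ 3 * Tr <= 1.
  have b0 : 0 < Tr `^ (-(1/3)) by apply: powR_gt0.
  have h : g ^+ 3 <= (Tr `^ (-(1/3))) ^+ 3.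
    by rewrite ler_pXn2r // nnegrE; lra.
  rewrite -(powR_mulrn 3 (ltW b0)) -powRrM in h.
  have E : (-(1/3) * 3%:R : R) = - (1%:R) by field.
  rewrite E powR_invn in h; last by lra.
  rewrite expr1 in h.
  have := ler_wpM2r (ltW Tpos) h; rewrite mulVf //; exact: lt0r_neq0.
have eT3 : 3%:R <= e * Tr.
  apply: pow_mono3; [lra | apply: mulr_ge0; lra |].
  have -> : (e * Tr) ^+ 3 = (e ^+ 3 * Tr ^+ 2) * Tr by ring.
  have -> : (3%:R : R) ^+ 3 = 27%:R by rewrite -natrX.
  have := ler_wpM2r (ltW Tpos) N1; lra.
have F7 : 12%:R <= g * Tr.
  have := ler_wpM2r (ltW Tpos) eg; lra.
have ge2 : g <= e ^+ 2 * Tr.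
  apply: pow_mono3; [lra | apply: mulr_ge0; [apply: exprn_ge0; lra | lra] |].
  have h1 : 1 <= e ^+ 6 * Tr ^+ 4.
    have -> : e ^+ 6 * Tr ^+ 4 = (e ^+ 3 * Tr ^+ 2) ^+ 2 by ring.
    exact: exprn_ege1.
  have : g ^+ 3 * Tr <= (e ^+ 2 * Tr) ^+ 3 * Tr.
    have -> : (e ^+ 2 * Tr) ^+ 3 * Tr = e ^+ 6 * Tr ^+ 4 by ring.
    lra.
  by rewrite ler_pM2r.
have F6 : 1 / e <= e * Tr / g.
  rewrite -subr_ge0.
  have -> : e * Tr / g - 1 / e = (e ^+ 2 * Tr - g) / (e * g) by field; nz.
  apply: divr_ge0; [lra | apply: mulr_ge0; lra].
have hd' : T = (T1 T * 100)%N by rewrite /T1 divnK.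
have TrN : Tr = 100%:R * (T1 T)%:R by rewrite /Tr {1}hd' natrM mulrC.
have n22 : (22 <= T1 T)%N by rewrite -(ler_nat R); lra.
have hk : (T <= 2400 * (T1 T %/ 2 %/ 6))%N by (clear -hd' n22; lia).
have hkR : Tr <= 2400%:R * (T1 T %/ 2 %/ 6)%:R by rewrite /Tr -natrM ler_nat.
have C0 : (0 : R) < 2400%:R by lra.
have sgk6 := big_bound e0 e1 C0 W0 nf1 WTr Tpos N1 hkR.
have sg0 : 0 <= sg e by rewrite /sg; lra.
have sg1 : sg e <= 1 by rewrite /sg; lra.
have sgm : sg e ^+ (T1 T %/ 2) <= e ^+ 2.
  apply: le_trans sgk6; apply: ler_wiXn2l => //; (clear -hd' n22; lia).
have e2e : e ^+ 2 <= e by rewrite expr2; clear -e0 e1; nra.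
have K0 : 0 <= kap e T 1 by apply: kap_ge0.
have K1 : kap e T 1 / e <= 1.
  have Ke := kap1_le _ _ _ e0 e1 hd' sgm.
  rewrite ler_pdivrMr // mul1r; exact: le_trans Ke e2e.
have M0 : 0 <= mu e g T 1 by apply: mu_ge0.
have M1 : mu e g T 1 <= 1.
  apply: (mu1_le _ _ _ _ e0 e1 g0) => //; first by clear -e0 eg; lra.
  by clear -hd' n22; lia.
have HhB := Hh_ge R T hd'.
have l0 : 0 <= - ln (1 / 2 : R) by rewrite oppr_ge0; apply: ln_le0; clear; lra.
have hI : InvS (fun _ : 'I_2 => (1 / 2%:R : R)).
  by split; [clear; lra | split; clear; lra].
have hL := @dp R e g T e0 e1 g0 g1 eg T 1 (fun _ => 1 / 2%:R) hI (addnC 1 T).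
rewrite /Vf /= addnK ps_half // acf1_eq in hL.
rewrite /expRegret.
have hm := min2_le (fun i : 'I_2 => \sum_(1 <= t < T.+1) two_phase R T t i) (\sum_(1 <= t < T.+1) two_phase R T t ord0).
have hm' : \big[Num.min/(\sum_(1 <= t < T.+1) two_phase R T t ord0)]_(i < 2) \sum_(1 <= t < T.+1) two_phase R T t i <= (T1 T)%:R.
  by apply: le_trans hm _; rewrite /= sum_tp0.
rewrite -/Tr in hL.
exact: (final_ineq _ _ _ _ _ _ _ _ _ _ _ e0 g0 g1 Tpos TrN HhB l0 K0 K1 M0 M1 F6 F7 hL hm').
Qed.
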